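(* Let $\mathcal{T}=(\mathcal{V},\mathcal{E})$ obey the LC-PF model and covariance assumption of the context, and let $k_1$ be as defined there. Let $\mathcal{E}_{full}\supseteq\mathcal{E}$ be a set of candidate edges on $\mathcal{V}$. Suppose that for all $a\neq b$ in $\mathcal{V}$, real numbers $\hat\phi_{ab}$ (empirical estimates) satisfy $|\hat\phi_{ab}-\phi_{ab}|<k_1/2$. Then the minimum weight spanning tree of $(\mathcal{V},\mathcal{E}_{full})$ with edge weights $\hat\phi_{ab}$ (the output of Algorithm 1) has edge set exactly $\mathcal{E}$.
   Context: $\mathcal{T}=(\mathcal{V},\mathcal{E})$ is a tree with a distinguished root (substation) of degree one. Each edge $(ab)$ has resistance $r_{ab}>0$ and reactance $x_{ab}>0$; $r_{\min},x_{\min}$ denote their minimum values. Let $H_{1/r},H_{1/x}$ be the weighted Laplacians with edge weights $1/r_{ab}$, $1/x_{ab}$, with the root row and column removed. Non-root nodes have random injections $p_a,q_a$. The LC-PF model gives $v=H_{1/r}^{-1}p+H_{1/x}^{-1}q$ and $\theta=H_{1/x}^{-1}p-H_{1/r}^{-1}q$; the root voltage is constant. Covariance assumption: $\Omega_p,\Omega_q$ are the covariances of $p,q$, and $\Omega_{pq}=\mathbb{E}[(p-\mathbb{E}p)(q-\mathbb{E}q)^T]=\Omega_{qp}^T$. For distinct non-root $a,b$, $\Omega_p(a,b)=\Omega_q(a,b)=\Omega_{qp}(a,b)=0$, and $\Omega_{qp}(a,a)\ge0$. Define $\phi_{ab}=\mathbb{E}[((v_a-\mathbb{E}v_a)-(v_b-\mathbb{E}v_b))^2]$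 and $k_1=\min(r_{\min}^2,x_{\min}^2)\min_{d}\big(\Omega_p(d,d)+\Omega_q(d,d)+2\Omega_{pq}(d,d)\big)$, the inner minimum being over non-root nodes $d$. *)

(* Defs.v *)
From HB Require Import structures.
From mathcomp Require Import all_boot all_order all_algebra.
Set Implicit Arguments. Unset Strict Implicit. Unset Printing Implicit Defensive.
Import Order.TTheory GRing.Theory Num.Theory.
Local Open Scope ring_scope.

Section Defs.
Variable R : realFieldType.
Variable n : nat.
(* vertices: 'I_n.+1 ; edges: 2-element subsets of vertices *)
Notation V := ('I_n.+1).

Definition adj (T : {set {set V}}) : rel V := fun x y => [set x; y] \in T.

(* T is a tree spanning all vertices: connected, and acyclic
   (every edge is a bridge), with all edges 2-element sets *)
Definition is_spanning_tree (T : {set {set V}}) : Prop :=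
  [/\ forall e, e \in T -> #|e| = 2%N,
      forall x y : V, connect (adj T) x y
    & forall e x y, e \in T -> e = [set x; y] ->
        ~~ connect (adj (T :\ e)) x y].

Definition minset (T : finType) (A : {pred T}) (f : T -> R) : R :=
  \big[Num.min/ head 0 [seq f x | x <- enum A]]_(x in A) f x.

Definition lap (E : {set {set V}}) (w : {set V} -> R) : 'M[R]_(n.+1) :=
  \matrix_(a, b) if a == b then \sum_(c | [set a; c] \in E) w [set a; c]
                 else if [set a; b] \in E then - w [set a; b] else 0.

(* Laplacian with root row and column removed; non-root node i : 'I_n is
   the vertex lift root i *)
Definition reduced (root : V) (L : 'M[R]_(n.+1)) : 'M[R]_n :=
  \matrix_(i, j) L (lift root i) (lift root j).

Definition Hmat (root : V) (E : {set {set V}}) (w : {set V} -> R) : 'M[R]_n :=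
  reduced root (lap E (fun e => (w e)^-1)).

(* joint covariance of (p ; q) *)
Definition jointcov (Op Oq Opq : 'M[R]_n) : 'M[R]_(n + n) :=
  block_mx Op Opq Opq^T Oq.

Definition psd m (M : 'M[R]_m) : Prop :=
  M^T = M /\ forall u : 'rV[R]_m, 0 <= (u *m M *m u^T) 0 0.

(* covariance of v = H_{1/r}^{-1} p + H_{1/x}^{-1} q over the non-root nodes *)
Definition vcov_nr (root : V) (E : {set {set V}}) (r x : {set V} -> R)
  (Op Oq Opq : 'M[R]_n) : 'M[R]_n :=
  let A := row_mx (invmx (Hmat root E r)) (invmx (Hmat root E x)) in
  A *m jointcov Op Oq Opq *m A^T.

(* covariance of v over all nodes; root voltage is constant *)
Definition vcov root E r x Op Oq Opq (a b : V) : R :=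
  match unlift root a, unlift root b with
  | Some i, Some j => vcov_nr root E r x Op Oq Opq i j
  | _, _ => 0
  end.

(* phi_ab = E[((v_a - E v_a) - (v_b - E v_b))^2] *)
Definition phi root E r x Op Oq Opq (a b : V) : R :=
  vcov root E r x Op Oq Opq a a + vcov root E r x Op Oq Opq b b
  - 2 * vcov root E r x Op Oq Opq a b.

Definition k1 (E : {set {set V}}) (r x : {set V} -> R) (Op Oq Opq : 'M[R]_n) : R :=
  Num.min (minset (mem E) r ^+ 2) (minset (mem E) x ^+ 2) *
  minset (mem [set: 'I_n]) (fun d => Op d d + Oq d d + 2 * Opq d d).

Definition weight (T : {set {set V}}) (w : {set V} -> R) : R :=
  \sum_(e in T) w e.

End Defs.

(* Main.v *)
Require Import Defs.
From HB Require Import structures.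
From mathcomp Require Import all_boot all_order all_algebra.
From mathcomp Require Import ring lra.
Set Implicit Arguments. Unset Strict Implicit. Unset Printing Implicit Defensive.
Import Order.TTheory GRing.Theory Num.Theory.

Lemma closedP (T : finType) (e : rel T) (C : pred T) x y :
  C x -> (forall y z, C y -> e y z -> C z) -> connect e x y -> C y.
Proof.
move=> Cx Hc /connectP [p pth ->].
elim: p x Cx pth => //= z p IH x Cx /andP [exz pth].
exact: (IH z (Hc _ _ Cx exz) pth).
Qed.

Section Graph.
Variable n : nat.
Notation V := ('I_n.+1).
Implicit Types (F : {set {set V}}).

Lemma adj_sym F : symmetric (adj F).
Proof. by move=> x y; rewrite /adj setUC. Qed.

Lemma csym F x y : connect (adj F) x y = connect (adj F) y x.
Proof. exact: (sym_connect_sym (adj_sym F)). Qed.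

Lemma ctrans F x y z : connect (adj F) x y -> connect (adj F) y z -> connect (adj F) x z.
Proof. exact: connect_trans. Qed.

Lemma cmono F F' x y : F \subset F' -> connect (adj F) x y -> connect (adj F') x y.
Proof.
move=> sub; apply: (@closedP _ _ (fun z => connect (adj F') x z)) => // y0 z c1 ayz.
apply: (connect_trans c1); apply: connect1; rewrite /adj; exact: (subsetP sub).
Qed.

Lemma set2_eq (y z u v : V) : [set y; z] = [set u; v] ->
  (y = u /\ z = v) \/ (y = v /\ z = u).
Proof.
move=> H.
have yi : y \in [set u; v] by rewrite -H set21.
have zi : z \in [set u; v] by rewrite -H set22.
have ui : u \in [set y; z] by rewrite H set21.
have vi : v \in [set y; z] by rewrite H set22.
case/set2P: yi => ey; case/set2P: zi => ez; subst; auto;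
 move: vi ui; rewrite !in_set2 ?eqxx ?orbT ?orbb /=;
 first [ move=> /eqP ->; auto | move=> _ /eqP ->; auto ].
Qed.

Lemma csplit F e (u v x y : V) : e \in F -> e = [set u; v] ->
  connect (adj F) x y ->
  [\/ connect (adj (F :\ e)) x y,
      connect (adj (F :\ e)) x u /\ connect (adj (F :\ e)) v y |
      connect (adj (F :\ e)) x v /\ connect (adj (F :\ e)) u y].
Proof.
move=> eF ee.
set c := connect (adj (F :\ e)).
move=> H.
have: [|| c x y, c x u && c v y | c x v && c u y].
  apply: (@closedP _ (adj F) (fun z => [|| c x z, c x u && c v z | c x v && c u z]) x y _ _ H).
    by rewrite /= /c connect0.
  move=> y0 z Hy Hyz.
  have [Hez|Hez] := eqVneq [set y0; z] e.
    rewrite ee in Hez; case: (set2_eq Hez) => [[ey ez]|[ey ez]]; rewrite ez; move: Hy; rewrite ey.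
      case/or3P => [->|/andP[-> _]|/andP[-> _]]; by rewrite /c ?connect0 ?andbT ?orbT.
    case/or3P => [->|/andP[-> _]|/andP[-> _]]; by rewrite /c ?connect0 ?andbT ?orbT.
  have ad : adj (F :\ e) y0 z by rewrite /adj in_setD1 Hez; exact: Hyz.
  rewrite /c in Hy *.
  case/or3P: Hy => [h|/andP[h1 h2]|/andP[h1 h2]].
  - by rewrite (connect_trans h (connect1 ad)).
  - by rewrite h1 (connect_trans h2 (connect1 ad)) orbT.
  - by rewrite h1 (connect_trans h2 (connect1 ad)) !orbT.
by case/or3P => [h|/andP[h1 h2]|/andP[h1 h2]]; [apply: Or31|apply: Or32|apply: Or33].
Qed.

Lemma sides F e (u v z : V) : is_spanning_tree F -> e \in F -> e = [set u; v] ->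
  connect (adj (F :\ e)) z u \/ connect (adj (F :\ e)) z v.
Proof.
case=> _ Hc _ eF ee.
case: (csplit eF ee (Hc z u)) => [h|[h _]|[h _]]; by [left|left|right].
Qed.

Lemma bridge F e (u v : V) : is_spanning_tree F -> e \in F -> e = [set u; v] ->
  ~~ connect (adj (F :\ e)) u v.
Proof. by case=> _ _ Hb eF ee; apply: Hb. Qed.


Lemma two_set F e : (forall e, e \in F -> #|e| = 2) -> e \in F ->
  exists u v : V, u != v /\ e = [set u; v].
Proof. by move=> H /H /eqP /cards2P. Qed.

Lemma subDD (A : {set {set V}}) x y : A :\ x :\ y \subset A :\ y.
Proof. by apply/subsetP => z; rewrite !in_setD1 => /and3P[-> _ ->]. Qed.

Section Tree.
Variables (E : {set {set V}}) (root : V).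
Hypothesis HE : is_spanning_tree E.

Definition D e z := ~~ connect (adj (E :\ e)) root z.

Lemma D_root e : D e root = false.
Proof. by rewrite /D connect0. Qed.

Lemma D_conn e z z' : connect (adj (E :\ e)) z z' -> D e z = D e z'.
Proof.
move=> h; rewrite /D; congr negb; apply/idP/idP => h2; first exact: ctrans h2 h.
by apply: ctrans h2 _; rewrite csym.
Qed.

Lemma D_end e u v : e \in E -> e = [set u; v] -> D e u = ~~ D e v.
Proof.
move=> eE ee; rewrite /D negbK.
have hb := bridge HE eE ee.
case: (sides root HE eE ee) => h; rewrite h.
  apply/esym/negP => h2; move/negP: hb; apply; apply: ctrans h2; by rewrite csym.
apply/negP => h2; move/negP: hb; apply; apply: ctrans h; by rewrite csym.
Qed.

Lemma D_other e g a c : g \in E -> g != e -> g = [set a; c] -> D e a = D e c.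
Proof.
move=> gE ge gac; apply: D_conn; apply: connect1; by rewrite /adj -gac in_setD1 ge gE.
Qed.

Lemma conn_sameD g a b : g \in E -> D g a = D g b -> connect (adj (E :\ g)) a b.
Proof.
move=> gE hD.
have [u [v [_ ge]]] := two_set (let: And3 h _ _ := HE in h) gE.
have hu := D_end gE ge.
case: (sides a HE gE ge) => ha; case: (sides b HE gE ge) => hb.
- by apply: ctrans ha _; rewrite csym.
- by move: hD; rewrite (D_conn ha) (D_conn hb) hu; case: (D g v).
- by move: hD; rewrite (D_conn ha) (D_conn hb) hu; case: (D g v).
- by apply: ctrans ha _; rewrite csym.
Qed.

Lemma nest_sub e1 e2 u2 v2 : e1 \in E -> e2 \in E -> e2 = [set u2; v2] ->
  D e1 u2 -> forall y, D e2 y -> D e1 y.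
Proof.
move=> e1E e2E ee2 Du y Dy.
have [eq21|ne] := eqVneq e2 e1; first by rewrite -eq21.
rewrite /D; apply/negPn => h.
have e2F : e2 \in E :\ e1 by rewrite in_setD1 ne e2E.
case: (csplit e2F ee2 h) => [h1|[h1 _]|[h1 _]].
- by move/negP: Dy; apply; apply: cmono h1; apply: subDD.
- by move/negP: Du; apply; apply: cmono h1; apply: subD1set.
- by move: Du; rewrite (D_other e2E ne ee2) => /negP; apply; apply: cmono h1; apply: subD1set.
Qed.

Lemma nest_aux e1 e2 u2 v2 p z : e1 != e2 -> e1 \in E -> e2 \in E ->
  e2 = [set u2; v2] -> ~~ D e1 u2 -> ~~ D e1 v2 -> ~~ D e2 p ->
  connect (adj (E :\ e1)) p z -> D e1 z -> D e2 z -> False.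
Proof.
move=> ne e1E e2E ee2 nu nv np h Dz1 Dz2.
have e2F : e2 \in E :\ e1 by rewrite in_setD1 eq_sym ne e2E.
case: (csplit e2F ee2 h) => [h1|[_ h1]|[_ h1]].
- by move: Dz2; rewrite -(D_conn (cmono (subDD _ _ _) h1)) (negbTE np).
- by move: Dz1; rewrite -(D_conn (cmono (subD1set _ _) h1)) (negbTE nv).
- by move: Dz1; rewrite -(D_conn (cmono (subD1set _ _) h1)) (negbTE nu).
Qed.

Lemma nest e1 e2 z : e1 \in E -> e2 \in E -> D e1 z -> D e2 z ->
  (forall y, D e1 y -> D e2 y) \/ (forall y, D e2 y -> D e1 y).
Proof.
move=> e1E e2E Dz1 Dz2.
have two := (let: And3 h _ _ := HE in h).
have [u1 [v1 [_ ee1]]] := two_set two e1E.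
have [u2 [v2 [_ ee2]]] := two_set two e2E.
have [eq12|ne] := eqVneq e1 e2; first by left; rewrite eq12.
case Hu2: (D e1 u2); first by right; apply: nest_sub ee2 Hu2.
case Hu1: (D e2 u1); first by left; apply: nest_sub ee1 Hu1.
exfalso.
have ne' : e2 != e1 by rewrite eq_sym.
have nv2 : ~~ D e1 v2 by rewrite -(D_other e2E ne' ee2) Hu2.
have nv1 : ~~ D e2 v1 by rewrite -(D_other e1E ne ee1) Hu1.
have hc : connect (adj E) root z by case: HE.
case: (csplit e1E ee1 hc) => [h1|[_ h1]|[_ h1]].
- by move: Dz1; rewrite /D h1.
- by apply: (nest_aux ne e1E e2E ee2 (negbT Hu2) nv2 nv1 h1).
- by apply: (nest_aux ne e1E e2E ee2 (negbT Hu2) nv2 (negbT Hu1) h1).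
Qed.

Lemma path_sep a b : connect (adj [set e in E | D e a != D e b]) a b.
Proof.
set S := [set e in E | D e a != D e b].
have two := (let: And3 h _ _ := HE in h).
suff H : forall k (G : {set {set V}}), #|G| = k -> G \subset E :\: S -> connect (adj (E :\: G)) a b.
  apply: cmono (H _ _ erefl (subxx _)).
  by apply/subsetP => x; rewrite !inE; case: (x \in E); case: (D x a != D x b).
elim=> [|k IH] G cG sG.
  by move/eqP: cG; rewrite cards_eq0 => /eqP ->; rewrite setD0; case: HE.
have /set0Pn [g gG] : G != set0 by rewrite -card_gt0 cG.
have cG' : #|G :\ g| = k by move: cG; rewrite (cardsD1 g G) gG add1n => -[].
have sG' : G :\ g \subset E :\: S by apply: subset_trans sG; apply: subD1set.
have h := IH _ cG' sG'.
have gES : g \in E :\: S by apply: (subsetP sG).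
have gE : g \in E by move: gES; rewrite inE => /andP[].
have gS : D g a = D g b by move: gES; rewrite !inE gE andbT; case: eqP => // _ _; rewrite negbK; move/eqP.
have [u [v [_ ge]]] := two_set two gE.
have gF : g \in E :\: (G :\ g) by rewrite inE in_setD1 eqxx gE.
have eqF : E :\: (G :\ g) :\ g = E :\: G.
  apply/setP => x; rewrite !inE; case: (x =P g) => [->|_]; by rewrite ?gG ?andbF.
have sub : E :\: G \subset E :\ g.
  by apply/subsetP => x; rewrite !inE => /andP[xG ->]; rewrite andbT; apply: contraNneq xG => ->.
have hab := conn_sameD gE gS.
have hb := bridge HE gE ge.
case: (csplit gF ge h); rewrite eqF; [done|move=> [h1 h2]|move=> [h1 h2]]; exfalso; move/negP: hb; apply.
- apply: (ctrans (y:=a)); first by rewrite csym; exact: cmono sub h1.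
  apply: (ctrans hab); rewrite csym; exact: cmono sub h2.
- apply: (ctrans (y:=b)); first exact: cmono sub h2.
  apply: (ctrans (y:=a)); first by rewrite csym.
  exact: cmono sub h1.
Qed.

End Tree.

Lemma set1D1 (T : finType) (x : T) : [set x] :\ x = set0.
Proof. by apply/setP => y; rewrite !inE; case: eqP. Qed.

Lemma conn0 (x y : V) : connect (adj (set0 : {set {set V}})) x y -> x = y.
Proof.
move=> h; apply/eqP.
by apply: (@closedP _ _ (fun z => x == z) x y (eqxx _) _ h) => y0 z _; rewrite /adj inE.
Qed.

Lemma sep_two (E : {set {set V}}) (root a b : V) (e : {set V}) : is_spanning_tree E -> a != b -> [set a; b] \notin E ->
  e \in [set g in E | D E root g a != D E root g b] ->
  exists2 e', e' \in [set g in E | D E root g a != D E root g b] & e' != e.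
Proof.
move=> HE ab abE eS.
set S := [set g in E | D E root g a != D E root g b].
case: (boolP [exists e', (e' \in S) && (e' != e)]).
  by case/existsP => e' /andP[h1 h2]; exists e'.
rewrite negb_exists => /forallP Hall.
have sub : S \subset [set e].
  apply/subsetP => x xS; rewrite inE; move: (Hall x); rewrite xS /=; by move/negPn.
have h := cmono sub (path_sep root HE a b).
have eE : e \in E by move: eS; rewrite inE => /andP[].
have [u [v [_ ee]]] := two_set (let: And3 h _ _ := HE in h) eE.
have e1 : e \in [set e] by rewrite set11.
case: (csplit e1 ee h); rewrite set1D1; [move=> /conn0 hab|move=> [/conn0 h1 /conn0 h2]|move=> [/conn0 h1 /conn0 h2]].
- by rewrite hab eqxx in ab.
- by move: abE; rewrite h1 -h2 -ee eE.
- by move: abE; rewrite h1 -h2 setUC -ee eE.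
Qed.

Lemma exists_cross (E T : {set {set V}}) (root : V) (f : {set V}) (a b : V) : is_spanning_tree E -> is_spanning_tree T ->
  f \in T -> f = [set a; b] ->
  exists e u v, [/\ e \in [set g in E | D E root g a != D E root g b], e = [set u; v],
    connect (adj (T :\ f)) a u & ~~ connect (adj (T :\ f)) a v].
Proof.
move=> HE HT fT fab.
set S := [set g in E | D E root g a != D E root g b].
set c := connect (adj (T :\ f)).
have: [exists e in S, [exists u, exists v, (e == [set u; v]) && c a u && ~~ c a v]].
  apply: contraT => Hn; exfalso.
  move/negP: (bridge HT fT fab); apply.
  apply: (@closedP _ _ (fun z => c a z) a b _ _ (path_sep root HE a b)).
    by rewrite /c connect0.
  move=> y z Cy ayz; apply: contraT => nz; exfalso; move/negP: Hn; apply.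
  apply/existsP; exists [set y; z]; rewrite -/(adj S y z) ayz /=.
  apply/existsP; exists y; apply/existsP; exists z; by rewrite eqxx Cy nz.
case/existsP => e /andP[eS /existsP[u /existsP[v /andP[/andP[/eqP ee h1] h2]]]].
by exists e, u, v.
Qed.

Lemma tree_exchange (T Efull : {set {set V}}) (f e : {set V}) (a b u v : V) : is_spanning_tree T ->
  (forall x, x \in Efull -> #|x| = 2) -> T \subset Efull -> e \in Efull ->
  f \in T -> f = [set a; b] -> e = [set u; v] ->
  connect (adj (T :\ f)) a u -> ~~ connect (adj (T :\ f)) a v ->
  e \notin T :\ f /\ is_spanning_tree (e |: (T :\ f)).
Proof.
move=> HT two TF eF fT fab euv au nav.
have [_ Tcon Tbr] := HT.
have eT : e \notin T :\ f.
  apply/negP => eT; move/negP: nav; apply; apply: (ctrans au); apply: connect1; by rewrite /adj -euv.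
split=> //.
set T' := e |: (T :\ f).
have sub1 : T :\ f \subset T' by apply: subsetUr.
have eT' : e \in T' by rewrite setU11.
split.
- move=> x; rewrite /T' !inE => /orP[/eqP ->|/andP[_ xT]]; apply: two => //; exact: (subsetP TF).
- have toa : forall z, connect (adj T') z a.
    move=> z; case: (sides z HT fT fab) => h; first exact: cmono sub1 h.
    have vb : connect (adj (T :\ f)) v b.
      case: (sides v HT fT fab) => // h'; by move/negP: nav; rewrite csym.
    apply: (ctrans (y:=b)); first exact: cmono sub1 h.
    apply: (ctrans (y:=v)); first by rewrite csym; exact: cmono sub1 vb.
    apply: (ctrans (y:=u)); first by apply: connect1; rewrite /adj setUC -euv.
    by rewrite csym; exact: cmono sub1 au.
  by move=> x y; apply: (ctrans (toa x)); rewrite csym.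
- move=> g x y gT' gxy.
  have [ge|ne] := eqVneq g e.
    rewrite ge /T' setU1K //.
    move: gxy; rewrite ge euv => /esym /set2_eq [[-> ->]|[-> ->]]; apply/negP => h;
      move/negP: nav; apply; apply: (ctrans au); first [exact: h | by rewrite csym].
  have gTf : g \in T :\ f by move: gT'; rewrite /T' in_setU1 (negbTE ne).
  have gT : g \in T by move: gTf; rewrite inE => /andP[].
  have ge : e \in T' :\ g by rewrite in_setD1 eq_sym ne eT'.
  have subA : T' :\ g :\ e \subset T :\ g.
    apply/subsetP => z; rewrite !in_setD1 /T' in_setU1 in_setD1.
    by case: (z == e) => //=; case: (z == g) => //= /andP[_ ->].
  have subB : T' :\ g :\ e \subset T :\ f.
    apply/subsetP => z; rewrite !in_setD1 /T' in_setU1 in_setD1.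
    by case: (z == e) => //=; case: (z == g) => //=; case: (z == f).
  have axy : adj (T :\ f) x y by rewrite /adj -gxy.
  apply/negP => h.
  case: (csplit ge euv h) => [h1|[h1 h2]|[h1 h2]].
  - by move/negP: (Tbr g x y gT gxy); apply; apply: cmono subA h1.
  - move/negP: nav; apply; apply: (ctrans au).
    apply: (ctrans (y:=x)); first by rewrite csym; exact: cmono subB h1.
    apply: (ctrans (connect1 axy)); rewrite csym; exact: cmono subB h2.
  - move/negP: nav; apply; apply: (ctrans au).
    apply: (ctrans (y:=y)); first exact: cmono subB h2.
    apply: (ctrans (y:=x)); first by apply: connect1; rewrite adj_sym.
    exact: cmono subB h1.
Qed.

End Graph.

Local Open Scope ring_scope.

Section LA.
Variables (R : realFieldType) (n : nat) (root : 'I_n.+1) (E : {set {set 'I_n.+1}}).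
Notation V := ('I_n.+1).
Hypothesis HE : is_spanning_tree E.

Let two : forall e, e \in E -> #|e| = 2%N.
Proof. by case: HE. Qed.

Definition chi (e : {set V}) (z : V) : R :=
  if z \in e then (if D E root e z then 1 else -1) else 0.
Definition Dr (e : {set V}) (z : V) : R := (D E root e z)%:R.

Lemma sum2 (u v : V) (F : V -> R) : u != v -> (forall z, z != u -> z != v -> F z = 0) ->
  \sum_z F z = F u + F v.
Proof.
move=> uv HF; rewrite (bigD1 u) //= (bigD1 v) 1?eq_sym //= big1 ?addr0 //.
by move=> z /andP[zv zu]; apply: HF.
Qed.

Lemma set2_of (e : {set V}) (a b : V) : #|e| = 2%N -> a != b -> a \in e -> b \in e ->
  e = [set a; b].
Proof.
move=> ce ab ae be; apply/esym/eqP; rewrite eqEcard cards2 ab ce leqnn andbT.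
by apply/subsetP => z /set2P [->|->].
Qed.

Lemma chi_out (e : {set V}) (z : V) : z \notin e -> chi e z = 0.
Proof. by rewrite /chi => /negbTE ->. Qed.

Lemma sum_lift (F : V -> R) : \sum_z F z = F root + \sum_(k < n) F (lift root k).
Proof. by rewrite (bigD1_ord root). Qed.

Lemma Kchi (e e' : {set V}) : e \in E -> e' \in E ->
  \sum_(k < n) chi e (lift root k) * Dr e' (lift root k) = (e == e')%:R.
Proof.
move=> eE e'E.
have := sum_lift (fun z => chi e z * Dr e' z).
rewrite /Dr D_root mulr0 add0r => <-.
have [u [v [uv ee]]] := two_set two eE.
rewrite (@sum2 u v) //; last first.
  by move=> z zu zv; rewrite chi_out ?mul0r // ee in_set2 negb_or zu zv.
have hu := D_end root HE eE ee.
rewrite /chi ee !in_set2 !eqxx orbT /= -ee hu.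
have [<-|ne] := eqVneq e e'.
  by rewrite hu; case: (D E root e v) => /=; rewrite ?mulr1 ?mulr0 ?addr0 ?add0r.
rewrite (D_other root eE ne ee).
by case: (D E root e v); case: (D E root e' v) => /=; rewrite ?mulr1 ?mulr0 ?addr0 ?add0r ?subrr ?addNr.
Qed.

Lemma lap_edge (w : {set V} -> R) (a b : V) :
  lap E w a b = \sum_(e in E) w e * chi e a * chi e b.
Proof.
rewrite /lap mxE.
have [<-|ab] := eqVneq a b.
  rewrite (eq_bigr (fun e => w e * (a \in e)%:R)); last first.
    move=> e eE; rewrite /chi; case: (a \in e); case: (D E root e a);
     by rewrite ?mulr1 ?mulr0 ?mulrN1 ?opprK.
  rewrite (eq_bigr (fun c => \sum_(e in E) (e == [set a; c])%:R * w e)); last first.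
    move=> c cE; rewrite (bigD1 [set a; c]) //= eqxx mul1r big1 ?addr0 // => e /andP[_ ne].
    by rewrite (negbTE ne) mul0r.
  rewrite big_mkcond /=.
  rewrite (eq_bigr (fun c => \sum_(e in E) (e == [set a; c])%:R * w e)); last first.
    move=> c _; case: ifP => // nE; symmetry; apply: big1 => e eE.
    by case: eqP => [ee|]; [rewrite -ee eE in nE | rewrite mul0r].
  rewrite exchange_big /=.
  apply: eq_bigr => e eE; rewrite -mulr_suml mulrC; congr (_ * _).
  case ae: (a \in e).
    have [u [v [uv ee]]] := two_set two eE.
    have [c [ac ec]] : exists c, a != c /\ e = [set a; c].
      move: ae; rewrite ee in_set2 => /orP[/eqP ->|/eqP ->]; first by exists v.
      by exists u; rewrite eq_sym uv setUC.
    rewrite (bigD1 c) //= big1 ?addr0 ?ec ?eqxx //.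
    move=> c' nc; case: eqP => // /set2_eq [[_ cc]|[_ ca]]; first by rewrite cc eqxx in nc.
    by rewrite ca eqxx in ac.
  apply: big1 => c _; case: eqP => // ee; by rewrite ee set21 in ae.
case abE: ([set a; b] \in E).
  rewrite (bigD1 [set a; b]) //= big1 ?addr0.
    have hu := D_end root HE abE (erefl _).
    rewrite /chi !in_set2 !eqxx orbT /= hu.
    by case: (D E root [set a; b] b) => /=; rewrite ?mulrN1 ?mulr1 ?mulN1r.
  move=> e /andP[eE ne]; case ae: (a \in e); last by rewrite (chi_out (negbT ae)) mulr0 mul0r.
  case be: (b \in e); last by rewrite (chi_out (negbT be)) mulr0.
  by rewrite (set2_of (two eE) ab ae be) eqxx in ne.
rewrite big1 // => e eE; case ae: (a \in e); last by rewrite (chi_out (negbT ae)) mulr0 mul0r.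
case be: (b \in e); last by rewrite (chi_out (negbT be)) mulr0.
by rewrite -(set2_of (two eE) ab ae be) eE in abE.
Qed.


Lemma HmatE (w : {set V} -> R) i j :
  Hmat root E w i j = \sum_(e in E) (w e)^-1 * chi e (lift root i) * chi e (lift root j).
Proof. by rewrite /Hmat /reduced mxE lap_edge. Qed.

Definition Zm (w : {set V} -> R) : 'M[R]_n :=
  \matrix_(i, j) \sum_(e in E) w e * Dr e (lift root i) * Dr e (lift root j).

Lemma HZ (w : {set V} -> R) : (forall e, e \in E -> w e != 0) ->
  Hmat root E w *m Zm w = \matrix_(i, j) \sum_(e in E) chi e (lift root i) * Dr e (lift root j).
Proof.
move=> wnz; apply/matrixP => i j; rewrite !mxE.
rewrite (eq_bigr (fun k => \sum_(e in E) \sum_(e' in E)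
   ((w e)^-1 * chi e (lift root i) * w e' * Dr e' (lift root j)) *
   (chi e (lift root k) * Dr e' (lift root k)))); last first.
  move=> k _; rewrite HmatE mxE mulr_suml; apply: eq_bigr => e eE.
  rewrite mulr_sumr; apply: eq_bigr => e' _; ring.
rewrite exchange_big /=; apply: eq_bigr => e eE; rewrite exchange_big /=.
rewrite (eq_bigr (fun e' => ((w e)^-1 * chi e (lift root i) * w e' * Dr e' (lift root j)) * (e == e')%:R)); last first.
  by move=> e' e'E; rewrite -mulr_sumr Kchi.
rewrite (bigD1 e) //= eqxx mulr1 big1 ?addr0; last first.
  by move=> e' /andP[_ ne]; rewrite eq_sym (negbTE ne) mulr0.
by rewrite [_^-1 * _ * _]mulrAC mulVf ?wnz // mul1r.
Qed.

Lemma HZH (w : {set V} -> R) : (forall e, e \in E -> w e != 0) ->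
  Hmat root E w *m Zm w *m Hmat root E w = Hmat root E w.
Proof.
move=> wnz; rewrite HZ //; apply/matrixP => i j; rewrite [RHS]HmatE [LHS]mxE.
rewrite (eq_bigr (fun k => \sum_(e in E) \sum_(e' in E)
   (chi e (lift root i) * (w e')^-1 * chi e' (lift root j)) *
   (chi e' (lift root k) * Dr e (lift root k)))); last first.
  move=> k _; rewrite HmatE mxE mulr_suml; apply: eq_bigr => e eE.
  rewrite mulr_sumr; apply: eq_bigr => e' _; ring.
rewrite exchange_big /=; apply: eq_bigr => e eE; rewrite exchange_big /=.
rewrite (eq_bigr (fun e' => (chi e (lift root i) * (w e')^-1 * chi e' (lift root j)) * (e' == e)%:R)); last first.
  by move=> e' e'E; rewrite -mulr_sumr Kchi.
rewrite (bigD1 e) //= eqxx mulr1 big1 ?addr0; last first.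
  by move=> e' /andP[_ ne]; rewrite (negbTE ne) mulr0.
by rewrite mulrAC mulrC mulrA.
Qed.


Lemma HmatM (w : {set V} -> R) : Hmat root E w =
  \matrix_(i, j) \sum_(e in E) (w e)^-1 * chi e (lift root i) * chi e (lift root j).
Proof. by apply/matrixP => i j; rewrite HmatE mxE. Qed.

Lemma Hinj (w : {set V} -> R) (u : 'rV[R]_n) : (forall e, e \in E -> 0 < w e) ->
  u *m Hmat root E w = 0 -> u = 0.
Proof.
move=> wpos uH.
have q : (u *m Hmat root E w *m u^T) 0 0 =
   \sum_(e in E) (w e)^-1 * (\sum_i u 0 i * chi e (lift root i)) ^+ 2.
  rewrite HmatM !mxE.
  rewrite (eq_bigr (fun j => \sum_(e in E) \sum_i
     ((w e)^-1 * (u 0 i * chi e (lift root i)) * (u 0 j * chi e (lift root j))))); last first.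
    move=> j _; rewrite !mxE mulr_suml; rewrite exchange_big /=.
    apply: eq_bigr => i _; rewrite !mxE mulr_sumr mulr_suml; apply: eq_bigr => e _; ring.
  rewrite exchange_big /=; apply: eq_bigr => e _.
  symmetry; rewrite expr2 mulr_sumr mulr_sumr; apply: eq_bigr => j _.
  rewrite mulr_suml mulr_sumr; apply: eq_bigr => i _; ring.
rewrite uH mul0mx mxE in q.
have s0 : forall e, e \in E -> \sum_i u 0 i * chi e (lift root i) = 0.
  move=> e eE.
  have nn : forall e', e' \in E -> 0 <= (w e')^-1 * (\sum_i u 0 i * chi e' (lift root i)) ^+ 2.
    by move=> e' e'E; apply: mulr_ge0; [rewrite invr_ge0 ltW // wpos | apply: sqr_ge0].
  have h := psumr_eq0P nn (esym q) eE.
  by move/eqP: h; rewrite mulf_eq0 invr_eq0 (gt_eqF (wpos _ eE)) /= sqrf_eq0 => /eqP.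
pose ut (z : V) := if unlift root z is Some i then u 0 i else 0.
have utl : forall i, ut (lift root i) = u 0 i by move=> i; rewrite /ut liftK.
have utr : ut root = 0 by rewrite /ut unlift_none.
have ute : forall y z, [set y; z] \in E -> ut y = ut z.
  move=> y z yzE; have [->//|yz] := eqVneq y z.
  have := s0 _ yzE.
  rewrite (eq_bigr (fun i => ut (lift root i) * chi [set y; z] (lift root i))); last first.
    by move=> i _; rewrite utl.
  have := sum_lift (fun z0 => ut z0 * chi [set y; z] z0); rewrite utr mul0r add0r => <-.
  rewrite (@sum2 y z) //; last first.
    by move=> z0 z0y z0z; rewrite chi_out ?mulr0 // in_set2 negb_or z0y z0z.
  have hu := D_end root HE yzE (erefl _).
  rewrite /chi !in_set2 !eqxx orbT /= hu.
  case: (D E root [set y; z] z) => /=; rewrite ?mulrN1 ?mulr1 => /eqP.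
    by rewrite addrC subr_eq0 => /eqP.
  by rewrite subr_eq0 => /eqP.
have all0 : forall z, ut z = 0.
  move=> z; apply/eqP.
  have hc : connect (adj E) root z by case: HE.
  apply: (@closedP _ _ (fun z => ut z == 0) root z _ _ hc); first by rewrite utr.
  by move=> y z0 /eqP hy hyz; rewrite -(ute _ _ hyz) hy.
by apply/rowP => i; rewrite mxE -utl all0.
Qed.

Lemma Hunit (w : {set V} -> R) : (forall e, e \in E -> 0 < w e) ->
  Hmat root E w \in unitmx.
Proof.
move=> wpos.
rewrite -row_free_unit -kermx_eq0; apply/eqP/row_matrixP => k; rewrite row0.
apply: (Hinj wpos); by rewrite -row_mul mulmx_ker row0.
Qed.

Lemma invH (w : {set V} -> R) : (forall e, e \in E -> 0 < w e) ->
  invmx (Hmat root E w) = Zm w.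
Proof.
move=> wpos.
have wnz : forall e, e \in E -> w e != 0 by move=> e /wpos /gt_eqF ->.
have Hu := Hunit wpos.
have e := HZH wnz.
transitivity (invmx (Hmat root E w) *m (Hmat root E w *m Zm w *m Hmat root E w) *m invmx (Hmat root E w)).
  by rewrite e mulVmx // mul1mx.
by rewrite !mulmxA mulVmx // mul1mx -mulmxA mulmxV // mulmx1.
Qed.


End LA.

Section Min.
Variable R : realFieldType.

Lemma minset_le (T : finType) (A : {pred T}) (f : T -> R) x : x \in A -> Defs.minset A f <= f x.
Proof. by move=> xA; rewrite /Defs.minset (bigD1 x) //= ge_min lexx. Qed.

Lemma minset_gt0 (T : finType) (A : {pred T}) (f : T -> R) x : x \in A ->
  (forall y, y \in A -> 0 < f y) -> 0 < Defs.minset A f.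
Proof.
move=> xA Hf; rewrite /Defs.minset; apply: (big_ind (fun y : R => 0 < y)) => //; last first.
  by move=> a b ha hb; rewrite lt_min ha hb.
have : x \in enum A by rewrite mem_enum.
case: (enum A) (@mem_enum _ A) => [|y s] hm //= _.
by apply: Hf; rewrite -hm in_cons eqxx.
Qed.

Lemma quad_delta m (M : 'M[R]_m) (i : 'I_m) : ((delta_mx 0 i : 'rV[R]_m) *m M *m (delta_mx 0 i : 'rV[R]_m)^T) 0 0 = M i i.
Proof. by rewrite -rowE trmx_delta -colE !mxE. Qed.

Lemma diag_prod n (A B M : 'M[R]_n) i j : (forall k l, k != l -> M k l = 0) ->
  (A *m M *m B^T) i j = \sum_k A i k * M k k * B j k.
Proof.
move=> HM; rewrite mxE; apply: eq_bigr => l _; rewrite !mxE.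
rewrite (bigD1 l) //= big1 ?addr0 // => k kl; by rewrite HM ?mulr0.
Qed.

End Min.

Lemma addmxE' (R : realFieldType) m p (A B : 'M[R]_(m, p)) i j : (A + B) i j = A i j + B i j.
Proof. by rewrite mxE. Qed.

Section Cov.
Variables (R : realFieldType) (n : nat) (root : 'I_n.+1) (E : {set {set 'I_n.+1}}).
Notation V := ('I_n.+1).
Hypothesis HE : is_spanning_tree E.
Variables (r x : {set V} -> R) (Op Oq Opq : 'M[R]_n).
Hypothesis rpos : forall e, e \in E -> 0 < r e.
Hypothesis xpos : forall e, e \in E -> 0 < x e.
Hypothesis Hdiag : forall a b : 'I_n, a != b -> [/\ Op a b = 0, Oq a b = 0 & Opq^T a b = 0].

Definition Zf (w : {set V} -> R) (z : V) (k : 'I_n) : R :=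
  \sum_(e in E) w e * Dr R root E e z * Dr R root E e (lift root k).

Lemma Zf_root w k : Zf w root k = 0.
Proof. by apply: big1 => e _; rewrite /Dr D_root mulr0 mul0r. Qed.

Lemma vcovE a b : vcov root E r x Op Oq Opq a b =
  \sum_k (Zf r a k * Op k k * Zf r b k + Zf x a k * Opq k k * Zf r b k +
          Zf r a k * Opq k k * Zf x b k + Zf x a k * Oq k k * Zf x b k).
Proof.
rewrite /vcov.
case: unliftP => [i ->|->]; last by rewrite big1 // => k _; rewrite !Zf_root; ring.
case: unliftP => [j ->|->]; last by rewrite big1 // => k _; rewrite !Zf_root; ring.
rewrite /vcov_nr /jointcov invH // invH // mul_row_block tr_row_mx mul_row_col !mulmxDl.
have dOp : forall k l, k != l -> Op k l = 0 by move=> k l /Hdiag [].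
have dOq : forall k l, k != l -> Oq k l = 0 by move=> k l /Hdiag [].
have dOpqT : forall k l, k != l -> Opq^T k l = 0 by move=> k l /Hdiag [].
have dOpq : forall k l, k != l -> Opq k l = 0.
  by move=> k l kl; have := dOpqT l k; rewrite mxE eq_sym => ->.
rewrite !addmxE' !diag_prod // -!big_split /=; apply: eq_bigr => k _.
rewrite !mxE /Zf; ring.
Qed.

Definition gq (k : 'I_n) (al be : R) : R := al ^+ 2 * Op k k + be ^+ 2 * Oq k k + 2 * al * be * Opq k k.

Lemma phiE a b : phi root E r x Op Oq Opq a b =
  \sum_k gq k (Zf r a k - Zf r b k) (Zf x a k - Zf x b k).
Proof.
rewrite /phi !vcovE mulr_sumr -sumrN -!big_split /=; apply: eq_bigr => k _.
rewrite /gq; ring.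
Qed.


Hypothesis Pge0 : forall k, 0 <= Op k k.
Hypothesis Qge0 : forall k, 0 <= Oq k k.
Hypothesis Sge0 : forall k, 0 <= Opq k k.

Lemma gq_mono k A B A0 B0 : 0 <= A0 -> A0 <= A -> 0 <= B0 -> B0 <= B ->
  gq k A0 B0 <= gq k A B.
Proof.
move=> h1 h2 h3 h4; rewrite /gq.
have P := Pge0 k; have Q := Qge0 k; have S := Sge0 k.
have e1 : A0 ^+ 2 <= A ^+ 2 by rewrite !expr2; apply: ler_pM.
have e2 : B0 ^+ 2 <= B ^+ 2 by rewrite !expr2; apply: ler_pM.
have hh := ler_pM h1 h3 h2 h4.
have e3 : 2 * A0 * B0 <= 2 * A * B by rewrite -!mulrA ler_wpM2l.
by rewrite lerD // ?lerD // ler_wpM2r.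
Qed.

Lemma gq_super k A B A0 B0 r1 x1 : 0 <= A0 -> 0 <= B0 -> 0 <= r1 -> 0 <= x1 ->
  A0 + r1 <= A -> B0 + x1 <= B -> gq k A0 B0 + gq k r1 x1 <= gq k A B.
Proof.
move=> h1 h2 h3 h4 h5 h6.
apply: le_trans (gq_mono _ _ h5 _ h6); last 2 first.
- exact: addr_ge0.
- exact: addr_ge0.
have P := Pge0 k; have Q := Qge0 k; have S := Sge0 k.
rewrite /gq -subr_ge0.
have -> : (A0 + r1) ^+ 2 * Op k k + (B0 + x1) ^+ 2 * Oq k k + 2 * (A0 + r1) * (B0 + x1) * Opq k k -
  (A0 ^+ 2 * Op k k + B0 ^+ 2 * Oq k k + 2 * A0 * B0 * Opq k k +
   (r1 ^+ 2 * Op k k + x1 ^+ 2 * Oq k k + 2 * r1 * x1 * Opq k k)) =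
  2 * ((A0 * r1) * Op k k + (B0 * x1) * Oq k k + (A0 * x1 + r1 * B0) * Opq k k) by ring.
have t1 : 0 <= A0 * r1 * Op k k by rewrite !mulr_ge0.
have t2 : 0 <= B0 * x1 * Oq k k by rewrite !mulr_ge0.
have t3 : 0 <= (A0 * x1 + r1 * B0) * Opq k k by rewrite !mulr_ge0 ?addr_ge0 ?mulr_ge0.
by rewrite mulr_ge0 // !addr_ge0.
Qed.


Notation DD := (D E root).

Definition Aab (w : {set V} -> R) (a b : V) (k : 'I_n) : R :=
  \sum_(e in E) w e * Dr R root E e (lift root k) * (DD e a != DD e b)%:R.

Lemma diffE w a b k : Zf w a k - Zf w b k =
  \sum_(e in E) w e * Dr R root E e (lift root k) * (Dr R root E e a - Dr R root E e b).
Proof. by rewrite /Zf -sumrB; apply: eq_bigr => e _; ring. Qed.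

Lemma signE a b k : gq k (Zf r a k - Zf r b k) (Zf x a k - Zf x b k) =
  gq k (Aab r a b k) (Aab x a b k).
Proof.
set k' := lift root k.
case: (boolP [exists e in E, DD e k' && DD e a && ~~ DD e b]).
  case/existsP => e1 /andP[e1E /andP[/andP[d1k d1a] d1b]].
  suff H : forall w, Zf w a k - Zf w b k = Aab w a b k by rewrite !H.
  move=> w; rewrite diffE; apply: eq_bigr => e eE.
  rewrite /Dr -/k'; case dk: (DD e k'); last by rewrite mulr0n mulr0 !mul0r.
  case da: (DD e a); case db: (DD e b) => //=; rewrite ?subrr //=.
  - by rewrite subr0.
  exfalso; case: (nest HE e1E eE d1k dk) => h.
    by move: (h a d1a); rewrite da.
  by move: (h b db); rewrite (negbTE d1b).
rewrite negb_exists => /forallP hn.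
suff H : forall w, Zf w a k - Zf w b k = - Aab w a b k by rewrite !H /gq; ring.
move=> w; rewrite diffE /Aab -sumrN; apply: eq_bigr => e eE.
rewrite /Dr -/k'; case dk: (DD e k'); last by rewrite mulr0n mulr0 !mul0r oppr0.
case da: (DD e a); case db: (DD e b).
- by rewrite /= ?subrr ?mulr0 ?mulr0n ?mulr0 ?oppr0.
- by move: (hn e); rewrite eE dk da db.
- by rewrite /= ?mulr1n ?sub0r ?mulrN ?mulr1.
- by rewrite /= ?subrr ?mulr0 ?mulr0n ?mulr0 ?oppr0.
Qed.

Lemma Aab_uv w e0 u v k : e0 \in E -> e0 = [set u; v] ->
  Aab w u v k = w e0 * Dr R root E e0 (lift root k).
Proof.
move=> e0E ee; rewrite /Aab (bigD1 e0) //= big1 ?addr0.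
  by rewrite (D_end root HE e0E ee); case: (DD e0 v); rewrite mulr1.
move=> e /andP[eE ne]; rewrite (D_other root e0E _ ee) ?eqxx ?mulr0 //.
by rewrite eq_sym.
Qed.

Lemma k1_le e1 k : e1 \in E -> k1 E r x Op Oq Opq <= gq k (r e1) (x e1).
Proof.
move=> e1E; rewrite /k1.
set mr := Defs.minset _ r; set mx := Defs.minset _ x.
set md := Defs.minset _ _.
have mr0 : 0 < mr by apply: (minset_gt0 (x := e1)).
have mx0 : 0 < mx by apply: (minset_gt0 (x := e1)).
have mr1 : mr <= r e1 by apply: minset_le.
have mx1 : mx <= x e1 by apply: minset_le.
have mdk : md <= Op k k + Oq k k + 2 * Opq k k.
  by rewrite /md; apply: minset_le; rewrite inE.
set m := Num.min _ _.
have m0 : 0 <= m by rewrite le_min !sqr_ge0.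
have r1 := rpos e1E; have x1 := xpos e1E.
have mr2 : m <= r e1 ^+ 2.
  apply: (@le_trans _ _ (mr ^+ 2)); first by rewrite /m ge_min lexx.
  rewrite !expr2; apply: ler_pM => //; exact: ltW.
have mx2 : m <= x e1 ^+ 2.
  apply: (@le_trans _ _ (mx ^+ 2)); first by rewrite /m ge_min lexx orbT.
  rewrite !expr2; apply: ler_pM => //; exact: ltW.
have mrx : m <= r e1 * x e1.
  case: (lerP (r e1) (x e1)) => h.
    apply: le_trans mr2 _; rewrite expr2; apply: ler_wpM2l => //; exact: ltW.
  apply: le_trans mx2 _; rewrite expr2; apply: ler_wpM2r => //; [exact: ltW|exact: ltW].
have P := Pge0 k; have Q := Qge0 k; have S := Sge0 k.
apply: le_trans (_ : m * (Op k k + Oq k k + 2 * Opq k k) <= _).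
  by apply: ler_wpM2l.
rewrite /gq !mulrDr.
rewrite lerD // ?lerD //; try by apply: ler_wpM2r.
rewrite mulrCA -!mulrA; apply: ler_wpM2l => //.
by rewrite mulrA; apply: ler_wpM2r.
Qed.


Lemma Dr_ge0 e z : 0 <= Dr R root E e z.
Proof. by rewrite /Dr ler0n. Qed.

Lemma Aab_ge1 w a b e0 j : (forall e, e \in E -> 0 <= w e) ->
  e0 \in [set g in E | DD g a != DD g b] ->
  w e0 * Dr R root E e0 (lift root j) <= Aab w a b j.
Proof.
move=> wge; rewrite inE => /andP[e0E d0].
rewrite /Aab (bigD1 e0) //= d0 mulr1 lerDl sumr_ge0 // => e /andP[eE _].
by rewrite !mulr_ge0 ?wge ?Dr_ge0 ?ler0n.
Qed.

Lemma Aab_ge2 w a b e0 e1 j : (forall e, e \in E -> 0 <= w e) ->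
  e0 \in [set g in E | DD g a != DD g b] ->
  e1 \in [set g in E | DD g a != DD g b] -> e1 != e0 ->
  w e0 * Dr R root E e0 (lift root j) + w e1 * Dr R root E e1 (lift root j) <= Aab w a b j.
Proof.
move=> wge; rewrite !inE => /andP[e0E d0] /andP[e1E d1] ne.
rewrite /Aab (bigD1 e0) //= d0 mulr1 lerD2l (bigD1 e1) /=; last by rewrite e1E ne.
rewrite d1 mulr1 lerDl sumr_ge0 // => e /andP[/andP[eE _] _].
by rewrite !mulr_ge0 ?wge ?Dr_ge0 ?ler0n.
Qed.

Lemma phi_gap a b e0 u v : a != b -> [set a; b] \notin E -> e0 \in E -> e0 = [set u; v] ->
  DD e0 a != DD e0 b ->
  phi root E r x Op Oq Opq u v + k1 E r x Op Oq Opq <= phi root E r x Op Oq Opq a b.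
Proof.
move=> ab abE e0E ee d0.
have e0S : e0 \in [set g in E | DD g a != DD g b] by rewrite inE e0E.
have [e1 e1S ne] := sep_two HE ab abE e0S.
have [e1E d1] : e1 \in E /\ DD e1 a != DD e1 b by move: e1S; rewrite inE => /andP.
have rge : forall e, e \in E -> 0 <= r e by move=> e /rpos /ltW.
have xge : forall e, e \in E -> 0 <= x e by move=> e /xpos /ltW.
have [k Dk] : exists k, DD e1 (lift root k).
  case: (unliftP root a) => [k ha|ha].
    case da: (DD e1 a); first by exists k; rewrite -ha.
    case: (unliftP root b) => [k' hb|hb]; first by exists k'; rewrite -hb; move: d1; rewrite da; case: (DD e1 b).
    by move: d1; rewrite da hb D_root.
  move: d1; rewrite ha D_root /= => db.
  case: (unliftP root b) => [k' hb|hb]; first by exists k'; rewrite -hb; move: db; case: (DD e1 b).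
  by move: db; rewrite hb D_root.
rewrite !phiE.
rewrite (eq_bigr (fun j => gq j (Aab r u v j) (Aab x u v j))); last by move=> j _; rewrite signE.
rewrite [X in _ <= X](eq_bigr (fun j => gq j (Aab r a b j) (Aab x a b j))); last by move=> j _; rewrite signE.
rewrite (bigD1 k) //= [X in _ <= X](bigD1 k) //= addrAC.
apply: lerD; last first.
  apply: ler_sum => j _; rewrite !(Aab_uv _ _ e0E ee).
  by apply: gq_mono; rewrite ?mulr_ge0 ?rge ?xge ?Dr_ge0 //; apply: Aab_ge1.
apply: le_trans (_ : gq k (Aab r u v k) (Aab x u v k) + gq k (r e1) (x e1) <= _).
  by rewrite lerD2l; apply: k1_le.
rewrite !(Aab_uv _ _ e0E ee).
apply: gq_super; rewrite ?mulr_ge0 ?rge ?xge ?Dr_ge0 //.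
- apply: le_trans (Aab_ge2 _ rge e0S e1S ne); by rewrite /Dr Dk mulr1.
- apply: le_trans (Aab_ge2 _ xge e0S e1S ne); by rewrite /Dr Dk mulr1.
Qed.

End Cov.

Unset Implicit Arguments.

Theorem theorem9 (R : realFieldType) (n : nat) (root : 'I_n.+1)
  (E Efull : {set {set 'I_n.+1}}) (r x : {set 'I_n.+1} -> R)
  (Op Oq Opq : 'M[R]_n) (phihat : {set 'I_n.+1} -> R) :
  is_spanning_tree E ->
  #|[set e in E | root \in e]| = 1%N ->
  (forall e, e \in E -> 0 < r e) ->
  (forall e, e \in E -> 0 < x e) ->
  psd (jointcov Op Oq Opq) ->
  (forall a b : 'I_n, a != b ->
     [/\ Op a b = 0, Oq a b = 0 & Opq^T a b = 0]) ->
  (forall a : 'I_n, 0 <= Opq^T a a) ->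
  E \subset Efull ->
  (forall e, e \in Efull -> #|e| = 2%N) ->
  (forall a b : 'I_n.+1, a != b ->
     `|phihat [set a; b] - phi root E r x Op Oq Opq a b| < k1 E r x Op Oq Opq / 2) ->
  forall T : {set {set 'I_n.+1}},
    T \subset Efull -> is_spanning_tree T ->
    (forall T' : {set {set 'I_n.+1}}, T' \subset Efull -> is_spanning_tree T' ->
       weight T phihat <= weight T' phihat) ->
    T = E.
Proof.
move=> HE _ rpos xpos [_ Hpsd] Hdiag HS EF two Herr T TF HT Hmin.
have Pge0 : forall k, 0 <= Op k k.
  move=> k; have := Hpsd (delta_mx 0 (lshift n k)); by rewrite quad_delta /jointcov block_mxEul.
have Qge0 : forall k, 0 <= Oq k k.
  move=> k; have := Hpsd (delta_mx 0 (rshift n k)); by rewrite quad_delta /jointcov block_mxEdr.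
have Sge0 : forall k, 0 <= Opq k k by move=> k; have := HS k; rewrite mxE.
have TE : T \subset E.
  apply/subsetP => f fT; apply: contraT => fE; exfalso.
  have [a [b [ab fab]]] := two_set two (subsetP TF _ fT).
  have [e [u [v [eS euv au nav]]]] := exists_cross root HE HT fT fab.
  have eE : e \in E by move: eS; rewrite inE => /andP[].
  have dab : D E root e a != D E root e b by move: eS; rewrite inE => /andP[].
  have eF : e \in Efull by apply: (subsetP EF).
  have [eT HT'] := tree_exchange HT two TF eF fT fab euv au nav.
  have T'F : e |: (T :\ f) \subset Efull.
    by rewrite subUset sub1set eF (subset_trans (subD1set _ _) TF).
  have hw := Hmin _ T'F HT'.
  rewrite /weight (big_setD1 f fT) (big_setU1 _ eT) /= lerD2r in hw.
  have uv : u != v.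
    by apply: contraNneq nav => <-.
  have abE : [set a; b] \notin E by rewrite -fab.
  have gap := phi_gap HE rpos xpos Hdiag Pge0 Qge0 Sge0 ab abE eE euv dab.
  have e1 := Herr _ _ ab; have e2 := Herr _ _ uv.
  rewrite -fab in e1; rewrite -euv in e2.
  move: e1 e2; rewrite !ltr_norml => /andP[e1 e1'] /andP[e2 e2'].
  move: hw gap e1 e1' e2 e2'; clear; lra.
apply/eqP; rewrite eqEsubset TE /=.
apply/subsetP => e eE; apply: contraT => eT; exfalso.
have [u [v [uv euv]]] := two_set two (subsetP EF _ eE).
have [_ Tc _] := HT.
have sub : T \subset E :\ e.
  by apply/subsetP => g gT; rewrite in_setD1 (subsetP TE _ gT) andbT; apply: contraNneq eT => <-.
by move/negP: (bridge HE eE euv); apply; apply: cmono sub (Tc u v).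
Qed.
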